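(* Let $n\ge 3$ and let $(T,\mathcal{S})$ be any radial subtree model of $R_n$, with branch points $m_1,\dots,m_n$ as defined in the context. Then for every $1<i<n$, the cover $V(m_i)$ equals $\{a_j\mid i\le j\le n\}\cup\{b_i\}\cup X$, where $X$ is a nonempty subset of $\{c_i,b_{i+1}\}$.
   Context: For $n\ge 3$, $R_n$ is the graph with vertex set $\bigcup_{i=1}^n\{a_i,b_i,c_i,d_i\}$ (all distinct), in which two distinct vertices are adjacent iff they both belong to one of the sets $C_i=\{a_i,b_i,c_i,d_i\}$ ($1\le i\le n$) or $C'_i=\{a_j\mid i\le j\le n\}\cup\{b_i,b_{i+1},c_i\}$ ($1\le i\le n-1$); these are exactly the maximal cliques of $R_n$. A subtree model of a graph $G$ is a pair $(T,\mathcal{S})$, $T$ a tree, $\mathcal{S}=\{S_v\mid v\in V(G)\}$ connected subtrees of $T$ with $S_u\cap S_v\ne\emptyset$ iff $uv\in E(G)$ for distinct $u,v$. It is a radial subtree model if for each $v$ there are a node $c_v$ and an integer $r_v\ge0$ with $S_v$ induced by exactly the nodes at distance at most $r_v$ from $c_v$. The cover of a node $x$ is $V(x)=\{v\mid x\in S_v\}$. For a maximal clique $C$, $S(C)=\bigcap_{v\in C}S_v$ (nonempty; disjoint for distinct maximal cliques). For disjoint subtrees $S,S'$, the connecting path $p(S,S')$ is the minimal path $P$ in $T$ with $S\cup S'\cup P$ connected; it has one endpoint in $S$ and one in $S'$. Branch points: $m_1$ and $m_n$ are the endpoints of $p(S(C_1),S(C_n))$ lying in $S(C_1)$ and $S(C_n)$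 respectively; for $1<i<n$, $s_i$ is the endpoint of $p(S(C_1),S(C_i))$ lying in $S(C_i)$, and $m_i$ is the median of $m_1,m_n,s_i$, i.e. the unique node of $T$ lying on all three paths between pairs of these nodes. *)

(* Defs.v *)
From mathcomp Require Import all_boot.
Set Implicit Arguments. Unset Strict Implicit. Unset Printing Implicit Defensive.

(* A vertex is a pair (kind, index) with kind 0,1,2,3 for a,b,c,d and
   index j : 'I_n standing for the paper's index j+1. *)
Notation RV n := ('I_4 * 'I_n)%type.

Definition is_a (n j : nat) (v : RV n) := ((v.1 : nat) == 0) && ((v.2 : nat) == j).
Definition is_b (n j : nat) (v : RV n) := ((v.1 : nat) == 1) && ((v.2 : nat) == j).
Definition is_c (n j : nat) (v : RV n) := ((v.1 : nat) == 2) && ((v.2 : nat) == j).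
Definition is_d (n j : nat) (v : RV n) := ((v.1 : nat) == 3) && ((v.2 : nat) == j).

Definition is_a_ge (n i : nat) (v : RV n) := ((v.1 : nat) == 0) && (i <= v.2).

Definition Cset (n i : nat) : {set RV n} := [set v : RV n | (v.2 : nat) == i].
(* C'_i = {a_j | j >= i} U {b_i, b_{i+1}, c_i}, only for i+1 < n (paper: i <= n-1) *)
Definition C'set (n i : nat) : {set RV n} :=
  [set v : RV n | [|| is_a_ge i v, is_b i v, is_b i.+1 v | is_c i v]].

Definition R_adj (n : nat) : rel (RV n) := fun u v =>
  (u != v) &&
  ([exists i : 'I_n, (u \in Cset n i) && (v \in Cset n i)] ||
   [exists i : 'I_n, [&& i.+1 < n, u \in C'set n i & v \in C'set n i]]).

Section TreeDefs.
Variable T : finType.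
Variable adj : rel T.

Definition walk (x : T) (p : seq T) (y : T) := path adj x p && (last x p == y).

Definition tpath (x : T) (p : seq T) := path adj x p && uniq (x :: p).

Definition is_tree :=
  symmetric adj /\ irreflexive adj /\
  forall x y : T, exists! p : seq T, walk x p y && uniq (x :: p).

Definition conn_set (A : {set T}) :=
  forall x y, x \in A -> y \in A ->
    exists p, path (fun u w => adj u w && (w \in A)) x p && (last x p == y).

Definition subtree (A : {set T}) := A != set0 /\ conn_set A.

(* connecting path p(A,B) = x :: p, with endpoint x in A and last x p in B *)
Definition conn_path (A B : {set T}) (x : T) (p : seq T) :=
  [/\ tpath x p, x \in A, last x p \in B,
      conn_set (A :|: B :|: [set z in x :: p]) &
      forall x' p', tpath x' p' -> x' \in A -> last x' p' \in B ->
        conn_set (A :|: B :|: [set z in x' :: p']) -> size p <= size p'].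

Definition cp_endpoints (A B : {set T}) (x y : T) :=
  exists p, conn_path A B x p /\ last x p = y.

Definition on_path (u v z : T) :=
  exists p, [/\ tpath u p, last u p = v & z \in u :: p].

Definition median (u v w z : T) :=
  [/\ on_path u v z, on_path u w z & on_path v w z].

End TreeDefs.

Section Models.
Variables (G : finType) (e : rel G) (T : finType) (adj : rel T).

Definition subtree_model (S : G -> {set T}) :=
  [/\ is_tree adj,
      forall v, subtree adj (S v) &
      forall u v, u != v -> (S u :&: S v != set0 <-> e u v)].

(* each S_v is exactly the ball of radius r_v around c_v (distance = length
   of a shortest walk) *)
Definition radial (S : G -> {set T}) :=
  forall v, exists (c : T) (r : nat),
    forall y, y \in S v <-> exists p, walk adj c p y /\ size p <= r.

Definition vcover (S : G -> {set T}) (x : T) : {set G} := [set v | x \in S v].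

Definition SC (S : G -> {set T}) (C : {set G}) : {set T} := \bigcap_(v in C) S v.

End Models.

(* Main.v *)
Require Import Defs.
From mathcomp Require Import all_boot.
From mathcomp Require Import zify.
Set Implicit Arguments. Unset Strict Implicit. Unset Printing Implicit Defensive.

Section TreeL.
Variable T : finType.
Variable adj : rel T.

Lemma conn_U (A B : {set T}) w : conn_set adj A -> conn_set adj B ->
  w \in A -> w \in B -> conn_set adj (A :|: B).
Proof.
move=> cA cB wA wB.
set R := (fun u w => adj u w && (w \in A :|: B)).
have subA : forall x p, path (fun u w => adj u w && (w \in A)) x p -> path R x p.
  by move=> x p; apply: sub_path => u v /andP[H1 H]; rewrite /R H1 inE H.
have subB : forall x p, path (fun u w => adj u w && (w \in B)) x p -> path R x p.
  by move=> x p; apply: sub_path => u v /andP[H1 H]; rewrite /R H1 inE H orbT.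
have toW : forall x, x \in A :|: B -> exists p, path R x p && (last x p == w).
  move=> x; rewrite inE => /orP[xA|xB].
    by have [p /andP[pp pl]] := cA x w xA wA; exists p; rewrite subA.
  by have [p /andP[pp pl]] := cB x w xB wB; exists p; rewrite subB.
have fromW : forall y, y \in A :|: B -> exists p, path R w p && (last w p == y).
  move=> y; rewrite inE => /orP[yA|yB].
    by have [p /andP[pp pl]] := cA w y wA yA; exists p; rewrite subA.
  by have [p /andP[pp pl]] := cB w y wB yB; exists p; rewrite subB.
move=> x y xU yU.
have [p1 /andP[p1p /eqP p1l]] := toW x xU.
have [p2 /andP[p2p p2l]] := fromW y yU.
exists (p1 ++ p2); by rewrite cat_path last_cat p1l p1p p2p.
Qed.

Lemma path_in_all (U : {set T}) x p :
  path (fun u w => adj u w && (w \in U)) x p -> all (fun w => w \in U) p.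
Proof.
by elim: p x => //= w p IH x /andP[/andP[_ ->] /IH].
Qed.

Lemma hit (U : {set T}) y z m : is_tree adj -> conn_set adj U ->
  y \in U -> z \in U -> on_path adj y z m -> m \in U.
Proof.
move=> [_ [_ Hu]] cU yU zU [q [/andP[qp qu] ql mq]].
have [p /andP[pp /eqP pl]] := cU y z yU zU.
have allp := path_in_all pp.
have pp' : path adj y p by apply: sub_path pp => u w /andP[].
case: (shortenP pp') pl => p' p'p p'u subp' eql.
have [p0 [_ H0]] := Hu y z.
have e1 := H0 q; have e2 := H0 p'.
rewrite /walk qp ql eqxx qu in e1; rewrite /walk p'p eql eqxx p'u in e2.
have eq : q = p' by rewrite -e1 // -e2.
move: mq; rewrite eq inE => /orP[/eqP->//|mp].
by move/allP: allp; apply; apply: subp'.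
Qed.

End TreeL.

Section Comb.
Variable n' : nat.
Local Notation N := n'.+1.
Definition vx (k j : nat) : RV N := (inord k, inord j).

Lemma vxE (v : RV N) : v = vx v.1 v.2.
Proof. by case: v => a b; rewrite /vx /= !inord_val. Qed.

Definition cond k j i := (k = 0 /\ i <= j) \/ (k = 1 /\ (j = i \/ j = i.+1)) \/ (k = 2 /\ j = i).
Definition AdjP k1 j1 k2 j2 := (k1 = k2 /\ j1 = j2) \/ j1 = j2 \/
   exists i, i.+1 < N /\ cond k1 j1 i /\ cond k2 j2 i.

Lemma condP (v : RV N) i : v \in C'set N i -> cond v.1 v.2 i.
Proof.
rewrite inE /is_a_ge /is_b /is_c /cond.
case/or4P => /andP[/eqP -> H]; lia.
Qed.

Lemma condP' k j i : cond k j i -> k < 4 -> j < N -> vx k j \in C'set N i.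
Proof.
move=> Hc k4 jN; rewrite inE /is_a_ge /is_b /is_c /vx /= !inordK //.
move: Hc; rewrite /cond; case=> [[-> H]|[[-> [->|->]]|[-> ->]]].
- by rewrite eqxx H.
- by rewrite !eqxx orbT.
- by rewrite !eqxx !orbT.
- by rewrite !eqxx !orbT.
Qed.

Lemma adjP (u v : RV N) : (u == v) || R_adj u v -> AdjP u.1 u.2 v.1 v.2.
Proof.
case/orP => [/eqP->|]; first by left.
case/andP => _ /orP[/existsP[i /andP[]]|/existsP[i /and3P[Hi H1 H2]]].
  by rewrite !inE => /eqP -> /eqP ->; right; left.
by right; right; exists i; split => //; split; apply: condP.
Qed.

Variables (T : finType) (adj : rel T) (S : RV N -> {set T}).
Hypothesis Hmod : subtree_model (@R_adj N) adj S.

Lemma meets (u v : RV N) : (u == v) || R_adj u v -> exists x, (x \in S u) && (x \in S v).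
Proof.
case: Hmod => _ Hsub Hint.
case/orP => [/eqP->|H].
  have [/set0Pn [x xS] _] := Hsub v; by exists x; rewrite xS.
have [Huv _] := andP H.
have /set0Pn [x] := proj2 (Hint u v Huv) H.
by rewrite inE => xS; exists x.
Qed.

Lemma linkC k1 k2 j : k1 < 4 -> k2 < 4 -> j < N ->
  exists x, (x \in S (vx k1 j)) && (x \in S (vx k2 j)).
Proof.
move=> k1l k2l jN; apply: meets; case: eqP => //= /eqP ne.
rewrite /R_adj ne /=; apply/orP; left; apply/existsP; exists (inord j).
by rewrite !inE /vx /= eqxx.
Qed.

Lemma linkC' k1 j1 k2 j2 i : i.+1 < N -> k1 < 4 -> k2 < 4 -> j1 < N -> j2 < N ->
  cond k1 j1 i -> cond k2 j2 i ->
  exists x, (x \in S (vx k1 j1)) && (x \in S (vx k2 j2)).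
Proof.
move=> Hi k1l k2l j1N j2N c1 c2; apply: meets; case: eqP => //= /eqP ne.
rewrite /R_adj ne /=; apply/orP; right; apply/existsP; exists (inord i).
rewrite inordK ?Hi; last by apply: ltnW.
by rewrite /= !condP'.
Qed.

Lemma cliq (m : T) k1 j1 k2 j2 : k1 < 4 -> k2 < 4 -> j1 < N -> j2 < N ->
  m \in S (vx k1 j1) -> m \in S (vx k2 j2) -> AdjP k1 j1 k2 j2.
Proof.
move=> k1l k2l j1N j2N m1 m2.
case: Hmod => _ _ Hint.
have := @adjP (vx k1 j1) (vx k2 j2); rewrite /vx /= !inordK //; apply.
case: eqP => //= /eqP ne.
apply/(Hint _ _ ne)/set0Pn; exists m; by rewrite inE m1 m2.
Qed.

Lemma connS v : conn_set adj (S v).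
Proof. by case: Hmod => _ Hsub _; case: (Hsub v). Qed.

Definition Bset lo hi := [set x | [exists t : 'I_N, (lo <= t <= hi) && (x \in S (vx 1 t))]].

Lemma BsetI x lo hi t : lo <= t <= hi -> t < N -> x \in S (vx 1 t) -> x \in Bset lo hi.
Proof.
move=> Ht tN xS; rewrite inE; apply/existsP; exists (inord t).
by rewrite inordK // Ht.
Qed.

Lemma BsetE x lo hi : x \in Bset lo hi -> exists t, [/\ lo <= t <= hi, t < N & x \in S (vx 1 t)].
Proof.
by rewrite inE => /existsP [t /andP[Ht xS]]; exists t.
Qed.

Lemma conn_U' (A B : {set T}) : conn_set adj A -> conn_set adj B ->
  (exists w, (w \in A) && (w \in B)) -> conn_set adj (A :|: B).
Proof. by move=> cA cB [w /andP[wA wB]]; apply: conn_U cA cB wA wB. Qed.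

Lemma Bconn lo d : lo + d < N -> conn_set adj (Bset lo (lo + d)).
Proof.
elim: d => [|d IH] H.
  have -> : Bset lo (lo + 0) = S (vx 1 lo).
    apply/setP => x; apply/idP/idP => [/BsetE [t [Ht tN xS]]|xS].
      have E : (t : nat) = lo by lia.
      by rewrite -E.
    by apply: (BsetI (t := lo)) => //; lia.
  exact: connS.
have -> : Bset lo (lo + d.+1) = Bset lo (lo + d) :|: S (vx 1 (lo + d.+1)).
  apply/setP => x; rewrite [in RHS]inE.
  apply/idP/idP => [/BsetE [t [Ht tN xS]]|/orP[/BsetE [t [Ht tN xS]]|xS]].
  - case: (ltnP t (lo + d.+1)) => Hlt.
      by rewrite (BsetI (t := t)) //; lia.
    have E : (t : nat) = lo + d.+1 by lia.
    by rewrite -E xS orbT.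
  - by apply: (BsetI (t := t)) => //; lia.
  - by apply: (BsetI (t := lo + d.+1)) => //; lia.
apply: conn_U'; [apply: IH; lia| exact: connS|].
have [w /andP[w1 w2]] := @linkC' 1 (lo + d) 1 (lo + d.+1) (lo + d)
   ltac:(lia) isT isT ltac:(lia) ltac:(lia) ltac:(rewrite /cond; lia) ltac:(rewrite /cond; lia).
exists w; rewrite w2 andbT; apply: (BsetI (t := lo + d)) => //; lia.
Qed.

End Comb.

Unset Implicit Arguments.

Ltac lia' := repeat match goal with H : is_true (in_mem _ _) |- _ => clear H end; lia.
Ltac adjlia := rewrite /AdjP /cond; case=> [?|[?|[? [? [? ?]]]]]; lia'.

Theorem lemma5 (n : nat) (hn : 3 <= n) (T : finType) (adj : rel T)
    (S : RV n -> {set T}) :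
  subtree_model (@R_adj n) adj S -> radial adj S ->
  forall m1 mn : T,
    cp_endpoints adj (SC S (Cset n 0)) (SC S (Cset n n.-1)) m1 mn ->
  forall i : nat, 0 < i < n.-1 ->
  forall s m : T,
    (exists x, cp_endpoints adj (SC S (Cset n 0)) (SC S (Cset n i)) x s) ->
    median adj m1 mn s m ->
  exists X : {set RV n},
    [/\ X \subset [set v : RV n | is_c i v || is_b i.+1 v],
        X != set0 &
        vcover S m = [set v : RV n | is_a_ge i v || is_b i v] :|: X].
Proof.
case: n hn S => [//|n'] hn S Hmod _ m1 mn [p [[_ m1A mnB _ _] pl]] i /andP[i0 iN]
  s m [x [q [[_ _ sB _ _] ql]]] [Hm1n Hm1s Hmns].
rewrite pl in mnB; rewrite ql in sB; simpl in iN.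
have Htree : is_tree adj by case: Hmod.
have inSC : forall y j k, y \in SC S (Cset n'.+1 j) -> k < 4 -> j < n'.+1 ->
    y \in S (vx n' k j).
  by move=> y j k /bigcapP H k4 jN; apply: H; rewrite inE /vx /= inordK.
have m1d : m1 \in S (vx n' 3 0) by apply: inSC.
have mnd : mn \in S (vx n' 3 n') by apply: inSC.
have sd : s \in S (vx n' 3 i) by apply: inSC => //; lia'.
have CL : forall k1 j1 k2 j2, m \in S (vx n' k1 j1) -> m \in S (vx n' k2 j2) ->
   k1 < 4 -> k2 < 4 -> j1 < n'.+1 -> j2 < n'.+1 -> AdjP n' k1 j1 k2 j2.
  by move=> k1 j1 k2 j2 H1 H2 k1l k2l j1l j2l; apply: (cliq Hmod) H1 H2.
have cS : forall v, conn_set adj (S v) by move=> v; apply: (connS Hmod).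
have hR1 : m \in S (vx n' 3 i) :|: S (vx n' 0 i) :|: S (vx n' 0 n') :|: S (vx n' 3 n').
  apply: (hit Htree _ _ _ Hmns); last 2 first.
  - by rewrite !in_setU mnd !orbT.
  - by rewrite !in_setU sd.
  apply: conn_U'; [apply: conn_U'; [apply: conn_U'; [exact: cS|exact: cS|]|exact: cS|]|exact: cS|].
  - have [w /andP[w1 w2]] := @linkC n' T adj S Hmod 3 0 i isT isT ltac:(lia').
    by exists w; rewrite w1 w2.
  - have [w /andP[w1 w2]] := @linkC' n' T adj S Hmod 0 i 0 n' 0 ltac:(lia') isT isT ltac:(lia') ltac:(lia') ltac:(rewrite /cond; lia') ltac:(rewrite /cond; lia').
    by exists w; rewrite !in_setU w1 w2 orbT.
  - have [w /andP[w1 w2]] := @linkC n' T adj S Hmod 0 3 n' isT isT ltac:(lia').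
    by exists w; rewrite !in_setU w1 w2 orbT.
have cB : forall lo hi, lo <= hi -> hi < n'.+1 -> conn_set adj (Bset S lo hi).
  by move=> lo hi H1 H2; have := @Bconn n' T adj S Hmod lo (hi - lo) ltac:(lia'); rewrite subnKC.
have hP1 : m \in S (vx n' 3 0) :|: S (vx n' 0 0) :|: S (vx n' 0 n') :|: S (vx n' 3 n').
  apply: (hit Htree _ _ _ Hm1n); last 2 first.
  - by rewrite !in_setU m1d.
  - by rewrite !in_setU mnd !orbT.
  apply: conn_U'; [apply: conn_U'; [apply: conn_U'; [exact: cS|exact: cS|]|exact: cS|]|exact: cS|].
  - have [w /andP[w1 w2]] := @linkC n' T adj S Hmod 3 0 0 isT isT ltac:(lia').
    by exists w; rewrite w1 w2.
  - have [w /andP[w1 w2]] := @linkC' n' T adj S Hmod 0 0 0 n' 0 ltac:(lia') isT isT ltac:(lia') ltac:(lia') ltac:(rewrite /cond; lia') ltac:(rewrite /cond; lia').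
    by exists w; rewrite !in_setU w1 w2 orbT.
  - have [w /andP[w1 w2]] := @linkC n' T adj S Hmod 0 3 n' isT isT ltac:(lia').
    by exists w; rewrite !in_setU w1 w2 orbT.
have hQ1 : m \in S (vx n' 3 0) :|: S (vx n' 0 0) :|: S (vx n' 0 i) :|: S (vx n' 3 i).
  apply: (hit Htree _ _ _ Hm1s); last 2 first.
  - by rewrite !in_setU m1d.
  - by rewrite !in_setU sd !orbT.
  apply: conn_U'; [apply: conn_U'; [apply: conn_U'; [exact: cS|exact: cS|]|exact: cS|]|exact: cS|].
  - have [w /andP[w1 w2]] := @linkC n' T adj S Hmod 3 0 0 isT isT ltac:(lia').
    by exists w; rewrite w1 w2.
  - have [w /andP[w1 w2]] := @linkC' n' T adj S Hmod 0 0 0 i 0 ltac:(lia') isT isT ltac:(lia') ltac:(lia') ltac:(rewrite /cond; lia') ltac:(rewrite /cond; lia').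
    by exists w; rewrite !in_setU w1 w2 orbT.
  - have [w /andP[w1 w2]] := @linkC n' T adj S Hmod 0 3 i isT isT ltac:(lia').
    by exists w; rewrite !in_setU w1 w2 orbT.
have hQ2 : m \in S (vx n' 3 0) :|: Bset S 0 i :|: S (vx n' 3 i).
  apply: (hit Htree _ _ _ Hm1s); last 2 first.
  - by rewrite !in_setU m1d.
  - by rewrite !in_setU sd !orbT.
  apply: conn_U'; [apply: conn_U'; [exact: cS|apply: cB; lia|]|exact: cS|].
  - have [w /andP[w1 w2]] := @linkC n' T adj S Hmod 3 1 0 isT isT ltac:(lia').
    exists w; apply/andP; split; first exact: w1.
    apply: (@BsetI n' T S w 0 i 0) => //; lia'.
  - have [w /andP[w1 w2]] := @linkC n' T adj S Hmod 1 3 i isT isT ltac:(lia').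
    exists w; apply/andP; split; last exact: w2.
    rewrite in_setU; apply/orP; right.
    apply: (@BsetI n' T S w 0 i i) => //; lia'.
have hR2 : m \in S (vx n' 3 i) :|: S (vx n' 2 i) :|: Bset S i.+1 n' :|: S (vx n' 3 n').
  apply: (hit Htree _ _ _ Hmns); last 2 first.
  - by rewrite !in_setU mnd !orbT.
  - by rewrite !in_setU sd.
  apply: conn_U'; [apply: conn_U'; [apply: conn_U'; [exact: cS|exact: cS|]|apply: cB; lia|]|exact: cS|].
  - have [w /andP[w1 w2]] := @linkC n' T adj S Hmod 3 2 i isT isT ltac:(lia').
    by exists w; rewrite w1 w2.
  - have [w /andP[w1 w2]] := @linkC' n' T adj S Hmod 2 i 1 i.+1 i ltac:(lia') isT isT ltac:(lia') ltac:(lia') ltac:(rewrite /cond; lia') ltac:(rewrite /cond; lia').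
    exists w; apply/andP; split; first by rewrite !in_setU w1 orbT.
    apply: (@BsetI n' T S w i.+1 n' i.+1) => //; lia'.
  - have [w /andP[w1 w2]] := @linkC n' T adj S Hmod 1 3 n' isT isT ltac:(lia').
    exists w; apply/andP; split; last exact: w2.
    rewrite in_setU; apply/orP; right.
    apply: (@BsetI n' T S w i.+1 n' n') => //; lia'.
have cl : forall k1 j1 k2 j2, m \in S (vx n' k1 j1) -> m \in S (vx n' k2 j2) ->
   k1 < 4 -> k2 < 4 -> j1 < n'.+1 -> j2 < n'.+1 -> AdjP n' k1 j1 k2 j2 := CL.
have nd0 : m \notin S (vx n' 3 0).
  apply/negP => H; move: hR1; rewrite !in_setU.
  by case/orP => [/orP[/orP[hm|hm]|hm]|hm]; have := cl _ _ _ _ H hm isT isT ltac:(lia') ltac:(lia'); adjlia.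
have ndi : m \notin S (vx n' 3 i).
  apply/negP => H; move: hP1; rewrite !in_setU.
  by case/orP => [/orP[/orP[hm|hm]|hm]|hm]; have := cl _ _ _ _ H hm isT isT ltac:(lia') ltac:(lia'); adjlia.
have ndn : m \notin S (vx n' 3 n').
  apply/negP => H; move: hQ1; rewrite !in_setU.
  by case/orP => [/orP[/orP[hm|hm]|hm]|hm]; have := cl _ _ _ _ H hm isT isT ltac:(lia') ltac:(lia'); adjlia.
have na0 : m \notin S (vx n' 0 0).
  apply/negP => H; move: hR2; rewrite !in_setU.
  case/orP => [/orP[/orP[hm|hm]|/BsetE [t [Ht tN hm]]]|hm].
  - by rewrite hm in ndi.
  - by have := cl _ _ _ _ H hm isT isT ltac:(lia') ltac:(lia'); adjlia.
  - by have := cl _ _ _ _ H hm isT isT ltac:(lia') ltac:(lia'); adjlia.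
  - by rewrite hm in ndn.
have ai : m \in S (vx n' 0 i).
  move: hQ1; rewrite !in_setU.
  case/orP => [/orP[/orP[hm|hm]|hm]|hm] //.
  - by rewrite hm in nd0.
  - by rewrite hm in na0.
  - by rewrite hm in ndi.
have an : m \in S (vx n' 0 n').
  move: hP1; rewrite !in_setU.
  case/orP => [/orP[/orP[hm|hm]|hm]|hm] //.
  - by rewrite hm in nd0.
  - by rewrite hm in na0.
  - by rewrite hm in ndn.
have [t [Ht htb]] : exists t, t <= i /\ m \in S (vx n' 1 t).
  move: hQ2; rewrite !in_setU.
  case/orP => [/orP[hm|/BsetE [t [Ht tN hm]]]|hm].
  - by rewrite hm in nd0.
  - by exists t; split => //; lia'.
  - by rewrite hm in ndi.
have xR : m \in S (vx n' 2 i) \/ exists u, i.+1 <= u <= n' /\ m \in S (vx n' 1 u).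
  move: hR2; rewrite !in_setU.
  case/orP => [/orP[/orP[hm|hm]|/BsetE [u [Hu uN hm]]]|hm].
  - by rewrite hm in ndi.
  - by left.
  - by right; exists u.
  - by rewrite hm in ndn.
have bi : m \in S (vx n' 1 i).
  have E : t = i.
    by case: xR => [hm|[u [Hu hm]]]; have := cl _ _ _ _ htb hm isT isT ltac:(lia') ltac:(lia'); adjlia.
  by rewrite -E.
have subC : forall k j, k < 4 -> j < n'.+1 -> m \in S (vx n' k j) -> cond k j i.
  move=> k j k4 jN Hv.
  have nd : ~ (k = 3 /\ j = i).
    by move=> [E1 E2]; move: Hv; rewrite E1 E2 (negbTE ndi).
  have A1 := cl _ _ _ _ Hv bi k4 isT jN ltac:(lia').
  case: xR => [hm|[u [Hu hm]]].
  - have A2 := cl _ _ _ _ Hv hm k4 isT jN ltac:(lia').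
    move: A1 A2; rewrite /AdjP /cond; case=> [?|[?|[? [? [? ?]]]]]; case=> [?|[?|[? [? [? ?]]]]]; lia'.
  - have A2 := cl _ _ _ _ Hv hm k4 isT jN ltac:(lia').
    move: A1 A2; rewrite /AdjP /cond; case=> [?|[?|[? [? [? ?]]]]]; case=> [?|[?|[? [? [? ?]]]]]; lia'.
have aj : forall j, i <= j <= n' -> m \in S (vx n' 0 j).
  move=> j Hj.
  case: (ltnP i j) => Hij; last by have E : j = i by [lia']; rewrite E.
  case: (ltnP j n') => Hjn; last by have E : j = n' by [lia']; rewrite E.
  have hPj : m \in S (vx n' 3 0) :|: S (vx n' 0 0) :|: S (vx n' 0 j) :|: S (vx n' 2 j)
      :|: Bset S j.+1 n' :|: S (vx n' 3 n').
    apply: (hit Htree _ _ _ Hm1n); last 2 first.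
    - by rewrite !in_setU m1d.
    - by rewrite !in_setU mnd !orbT.
    apply: conn_U'; [apply: conn_U'; [apply: conn_U'; [apply: conn_U'; [apply: conn_U';
      [exact: cS|exact: cS|]|exact: cS|]|exact: cS|]|apply: cB; lia'|]|exact: cS|].
    - have [w /andP[w1 w2]] := @linkC n' T adj S Hmod 3 0 0 isT isT ltac:(lia').
      by exists w; rewrite w1 w2.
    - have [w /andP[w1 w2]] := @linkC' n' T adj S Hmod 0 0 0 j 0 ltac:(lia') isT isT ltac:(lia') ltac:(lia') ltac:(rewrite /cond; lia') ltac:(rewrite /cond; lia').
      by exists w; rewrite !in_setU w1 w2 orbT.
    - have [w /andP[w1 w2]] := @linkC n' T adj S Hmod 0 2 j isT isT ltac:(lia').
      by exists w; rewrite !in_setU w1 w2 orbT.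
    - have [w /andP[w1 w2]] := @linkC' n' T adj S Hmod 2 j 1 j.+1 j ltac:(lia') isT isT ltac:(lia') ltac:(lia') ltac:(rewrite /cond; lia') ltac:(rewrite /cond; lia').
      exists w; apply/andP; split; first by rewrite !in_setU w1 orbT.
      apply: (@BsetI n' T S w j.+1 n' j.+1) => //; lia'.
    - have [w /andP[w1 w2]] := @linkC n' T adj S Hmod 1 3 n' isT isT ltac:(lia').
      exists w; apply/andP; split; last exact: w2.
      rewrite in_setU; apply/orP; right.
      apply: (@BsetI n' T S w j.+1 n' n') => //; lia'.
  move: hPj; rewrite !in_setU.
  case/orP => [/orP[/orP[/orP[/orP[hm|hm]|hm]|hm]|/BsetE [u [Hu uN hm]]]|hm].
  - by rewrite hm in nd0.
  - by rewrite hm in na0.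
  - exact: hm.
  - by exfalso; have := subC 2 j isT ltac:(lia') hm; rewrite /cond; lia'.
  - by exfalso; have := subC 1 u isT uN hm; rewrite /cond; lia'.
  - by rewrite hm in ndn.
exists (vcover S m :&: [set v : RV n'.+1 | is_c i v || is_b i.+1 v]).
split.
- exact: subsetIr.
- apply/set0Pn; case: xR => [hm|[u [Hu hm]]].
  + exists (vx n' 2 i); rewrite !inE hm /=; apply/orP; left.
    rewrite /is_c /vx /= !inordK ?eqxx //; lia'.
  + have Hc := subC 1 u isT ltac:(lia') hm.
    have E : u = i.+1 by move: Hc; rewrite /cond; lia'.
    exists (vx n' 1 u); rewrite !inE hm /=; apply/orP; right.
    rewrite /is_b /vx /= !inordK ?E ?eqxx //; lia'.
- apply/setP => v; rewrite !inE.
  have v1 := ltn_ord v.1; have v2 := ltn_ord v.2.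
  case Hv: (m \in S v) => /=.
  + have Hv' : m \in S (vx n' v.1 v.2) by rewrite -vxE.
    have Hc := subC _ _ v1 v2 Hv'.
    rewrite /is_a_ge /is_b /is_c.
    case: Hc => [[E1 E2]|[[E1 [E2|E2]]|[E1 E2]]]; rewrite E1 ?E2 ?eqxx /= ?orbT //.
  + symmetry; apply/negbTE/negP => H.
    have : m \in S v; last by rewrite Hv.
    rewrite (vxE v).
    move: H; rewrite /is_a_ge /is_b ?orbF => /orP[/andP[/eqP E1 E2]|/andP[/eqP E1 /eqP E2]]; rewrite E1 ?E2.
    * by apply: aj; rewrite E2 /= -ltnS; exact: ltn_ord.
    * exact: bi.
Qed.
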